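(* Let $B$ be an $n_c\times n_v$ binary matrix whose Tanner graph (the protograph) contains a cycle and has girth $g$. Let $\ell\ge1$, $N=2^\ell$, and let $H$ be the $n_cN\times n_vN$ block matrix obtained from $B$ by replacing each entry $B_{h,u}=1$ by a dyadic permutation matrix $P_{{\mathbf x}_{h,u}}$ (with arbitrary ${\mathbf x}_{h,u}\in\mathbb{F}_2^\ell$) and each entry $B_{h,u}=0$ by the $N\times N$ zero matrix. Then the girth of the Tanner graph of $H$ is at most $2g$.
   Context: Rows and columns of $N\times N$ binary matrices are indexed by $\mathbb{F}_2^\ell$ via ${\mathbf x}=(x_1,\dots,x_\ell)\leftrightarrow 1+\sum_i x_i2^{i-1}$. For ${\mathbf a}\in\mathbb{F}_2^\ell$, $P_{\mathbf a}$ is the $N\times N$ binary matrix with $(P_{\mathbf a})_{{\mathbf x},{\mathbf y}}=1$ iff ${\mathbf y}={\mathbf x}+{\mathbf a}$. The Tanner graph of a binary matrix is the bipartite graph with check nodes = rows, variable nodes = columns, edges at the $1$-entries; the girth is the length of a shortest cycle. *)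

(* Defs.v *)
From HB Require Import structures.
From mathcomp Require Import all_boot all_order all_algebra.
Set Implicit Arguments. Unset Strict Implicit. Unset Printing Implicit Defensive.
Import GRing.Theory.
Local Open Scope ring_scope.

(* A binary matrix with rows indexed by the finite type Rw and columns by Cl,
   given as its entry function (a MathComp matrix 'M['F_2]_(m,n) coerces to
   such a function on 'I_m and 'I_n). *)

(* Cycle of length 2k in the Tanner graph of M: distinct check nodes
   c_0..c_{k-1}, distinct variable nodes v_0..v_{k-1}, with edges
   c_i - v_i - c_{i+1 mod k}.  Any simple cycle in a bipartite graph has
   this form, with k >= 2. *)
Definition tanner_cycle (Rw Cl : finType) (M : Rw -> Cl -> 'F_2) (k : nat) : Prop :=
  (2 <= k)%N /\
  exists (c : 'I_k -> Rw) (v : 'I_k -> Cl),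
    injective c /\ injective v /\
    forall i : 'I_k, M (c i) (v i) = 1 /\ M (c (ordS i)) (v i) = 1.

Definition tanner_girth (Rw Cl : finType) (M : Rw -> Cl -> 'F_2) (g : nat) : Prop :=
  (exists k, tanner_cycle M k /\ g = (2 * k)%N) /\
  (forall k, tanner_cycle M k -> (g <= 2 * k)%N).

Notation F2vec l := 'rV['F_2]_l.

Definition dyadic_perm (l : nat) (a : F2vec l) (x y : F2vec l) : 'F_2 :=
  (y == x + a)%:R.

(* Lifted matrix H: block (h,u) is P_{X h u} if B h u = 1, zero otherwise.
   Row (h, x) is row h*N + (index of x), column (u, y) similarly. *)
Definition dyadic_lift (nc nv l : nat) (B : 'M['F_2]_(nc, nv))
  (X : 'I_nc -> 'I_nv -> F2vec l) :
  ('I_nc * F2vec l)%type -> ('I_nv * F2vec l)%type -> 'F_2 :=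
  fun r s => if B r.1 s.1 == 1 then dyadic_perm (X r.1 s.1) r.2 s.2 else 0.

(* Main.v *)
Require Import Defs.
From HB Require Import structures.
From mathcomp Require Import all_boot all_order all_algebra.
From mathcomp Require Import zify.
From Stdlib Require Import Classical.

Lemma addF2 l (a : 'rV['F_2]_l) : (a + a = 0)%R.
Proof.
apply/matrixP => i j; rewrite !mxE.
by case: (a i j) => [[|[|n]]] //= ?; apply: val_inj.
Qed.

Lemma mod2_cases (m i j : nat) : (i < m + m)%N -> (j < m + m)%N ->
  i %% m = j %% m -> [\/ i = j, j = (m + i)%N | i = (m + j)%N].
Proof.
move=> hi hj; case: (ltnP i m) => hi'; case: (ltnP j m) => hj'.
- by rewrite !modn_small // => ->; constructor 1.
- rewrite -(subnKC hj') modnDl (modn_small hi') modn_small; last by lia.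
  move=> e; constructor 2; lia.
- rewrite -(subnKC hi') modnDl (modn_small hj') modn_small; last by lia.
  move=> e; constructor 3; lia.
- rewrite -(subnKC hi') -(subnKC hj') !modnDl !modn_small; try lia.
  move=> e; constructor 1; lia.
Qed.

Lemma ex_min_P (P : nat -> Prop) n : P n ->
  exists m, P m /\ (m <= n)%N /\ forall j, P j -> (m <= j)%N.
Proof.
elim/ltn_ind: n => n IH Pn.
case: (classic (exists j, (j < n)%N /\ P j)) => [[j [hj Pj]]|hno].
- have [m [Pm [hm hmin]]] := IH j hj Pj.
  exists m; split=> //; split=> //; exact: leq_trans hm (ltnW hj).
- exists n; split=> //; split=> // j Pj.
  case: (leqP n j) => // hj; exfalso; apply: hno; by exists j.
Qed.

Import GRing.Theory.
Local Open Scope ring_scope.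

Lemma lift_cycle nc nv l (B : 'M['F_2]_(nc, nv)) (X : 'I_nc -> 'I_nv -> 'rV['F_2]_l)
  k (c : 'I_k.+1 -> 'I_nc) (v : 'I_k.+1 -> 'I_nv) :
  (1 <= k)%N -> injective c -> injective v ->
  (forall i, B (c i) (v i) = 1 /\ B (c (ordS i)) (v i) = 1) ->
  exists K, tanner_cycle (dyadic_lift B X) K /\ (1 < K)%N /\ (K <= 2 * k.+1)%N.
Proof.
move=> hk ci vi he.
pose o n : 'I_k.+1 := Ordinal (ltn_pmod n (ltn0Sn k)).
pose cn n := c (o n). pose vn n := v (o n).
pose d n := X (cn n) (vn n) + X (cn n.+1) (vn n).
pose x n := \sum_(j < n) d j.
have omod : forall i j, (i %% k.+1 = j %% k.+1)%N -> o i = o j.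
  by move=> i j e; apply: val_inj.
have hB1 : forall n, B (cn n) (vn n) = 1 by move=> n; case: (he (o n)).
have oS : forall n, ordS (o n) = o n.+1.
  by move=> n; apply: val_inj => /=; rewrite -addn1 modnDml addn1.
have hB2 : forall n, B (cn n.+1) (vn n) = 1.
  by move=> n; case: (he (o n)); rewrite /cn -oS.
have hd : forall n, d (k.+1 + n)%N = d n.
  move=> n; rewrite /d /cn /vn -addnS !(omod (k.+1 + _)%N _ (modnDl _ _)) //.
have hx : forall n, x (k.+1 + n)%N = x k.+1 + x n.
  move=> n; rewrite /x big_split_ord /=; congr (_ + _); apply: eq_bigr => i _.
  by rewrite hd.
have x0 : x 0%N = 0 by rewrite /x big_ord0.
have xS : forall n, x n.+1 = x n + d n.
  by move=> n; rewrite /x big_ord_recr.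
have gen : forall K, (2 <= K)%N -> x K = 0 -> (k.+1 %| K)%N ->
   (forall i j, (i < K)%N -> (j < K)%N -> (i %% k.+1 = j %% k.+1)%N -> x i = x j -> i = j) ->
   tanner_cycle (dyadic_lift B X) K.
  move=> K hK xK dK hinj; split=> //.
  exists (fun i : 'I_K => (cn i, x i)), (fun i : 'I_K => (vn i, x i + X (cn i) (vn i))).
  split; [|split].
  - move=> i j [e1 e2]; apply: val_inj; apply: (hinj _ _ (ltn_ord i) (ltn_ord j)) => //.
    exact: (congr1 val (ci _ _ e1)).
  - move=> i j [e1 e2]; apply: val_inj.
    have em : (i %% k.+1 = j %% k.+1)%N by exact: (congr1 val (vi _ _ e1)).
    apply: (hinj _ _ (ltn_ord i) (ltn_ord j)) => //.
    move: e2; rewrite /cn /vn (omod _ _ em); exact: addIr.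
  - move=> i; rewrite /dyadic_lift /= hB1 eqxx /dyadic_perm eqxx; split=> //.
    have ec : cn (i.+1 %% K)%N = cn i.+1.
      by rewrite /cn (omod _ i.+1) // (modn_dvdm _ dK).
    rewrite ec hB2 eqxx.
    have ex : x (i.+1 %% K)%N = x i.+1.
      case: (ltnP i.+1 K) => h; first by rewrite modn_small.
      have -> : i.+1 = K by apply/eqP; rewrite eqn_leq h ltn_ord.
      by rewrite modnn x0 xK.
    rewrite ex xS /d -addrA -(addrA (X (cn i) (vn i))) addF2 addr0 eqxx //.
case: (eqVneq (x k.+1) 0) => hS.
- exists k.+1; split; [apply: gen => //|split; lia].
  + by move=> i j hi hj; rewrite !modn_small.
- exists (k.+1 + k.+1)%N; split; [apply: gen|split; lia].
  + lia.
  + by rewrite hx addF2.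
  + by rewrite dvdn_add.
  + move=> i j hi hj em exj; case: (@mod2_cases _ _ _ hi hj em) => // e; exfalso.
    * move: exj; rewrite e hx -{1}(add0r (x i)) => /addIr h.
      by move: hS; rewrite -h eqxx.
    * move: exj; rewrite e hx -{2}(add0r (x j)) => /addIr h.
      by move: hS; rewrite h eqxx.
Qed.

Theorem mainTheorem7 (nc nv : nat) (B : 'M['F_2]_(nc, nv)) (g l : nat)
  (X : 'I_nc -> 'I_nv -> 'rV['F_2]_l) :
  (1 <= l)%N ->
  tanner_girth (fun h u => B h u) g ->
  exists g' : nat, tanner_girth (dyadic_lift B X) g' /\ (g' <= 2 * g)%N.
Proof.
move=> _ [[k [[hk [c [v [ci [vi he]]]]] ->]] _].
case: k hk c v ci vi he => [//|k] hk c v ci vi he.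
have [K [hK [_ hK2]]] := @lift_cycle nc nv l B X k c v hk ci vi he.
have [n [Pn [hn hmin]]] := @ex_min_P (fun m => tanner_cycle (dyadic_lift B X) m) K hK.
exists (2 * n)%N; split; last by lia.
split; first by exists n.
by move=> j /hmin hj; rewrite leq_mul2l hj orbT.
Qed.
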